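(* Let $\mathcal{N}_1:\mathcal{L}(\mathcal{H}_{a1})\to\mathcal{L}(\mathcal{H}_{b1})$ and $\mathcal{N}_2:\mathcal{L}(\mathcal{H}_{a2})\to\mathcal{L}(\mathcal{H}_{b2})$ be quantum channels with $\dim\mathcal{H}_{ai}=\dim\mathcal{H}_{bi}=d_i$, and let $0<t\le1$. If $t\ge\max(1/d_1^2,1/d_2^2)$ then $$\mathcal{O}_t(\mathcal{N}_1\otimes\mathcal{N}_2)\ge\mathcal{O}_t(\mathcal{N}_1)\,\mathcal{O}_t(\mathcal{N}_2),$$ and if $\sqrt t\ge\max(1/d_1^2,1/d_2^2)$ then $$\mathcal{O}_t(\mathcal{N}_1\otimes\mathcal{N}_2)\ge\mathcal{O}_{\sqrt t}(\mathcal{N}_1)\,\mathcal{O}_{\sqrt t}(\mathcal{N}_2).$$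
   Context: For a channel $\mathcal{N}:\mathcal{L}(\mathcal{H}_a)\to\mathcal{L}(\mathcal{H}_b)$ with $\dim\mathcal{H}_a=\dim\mathcal{H}_b=\dim\mathcal{H}_r=d$, define $\mathcal{O}_s(\mathcal{N})=\max\{\langle\phi_{rb}|(\mathrm{id}_r\otimes\mathcal{N})(\rho_{ra})|\phi_{rb}\rangle:\ \rho_{ra}\succeq0,\ \mathrm{Tr}\rho_{ra}=1,\ \mathrm{Tr}(\rho_{ra}^2)\le s\}$, where $|\phi_{rb}\rangle=\frac1{\sqrt d}\sum_i|\alpha_i\rangle_r|\alpha_i\rangle_b$. For $\mathcal{N}_1\otimes\mathcal{N}_2$ the reference is $\mathcal{H}_r=\mathcal{H}_{r1}\otimes\mathcal{H}_{r2}$ and the maximally entangled state is $\phi_{r1b1}\otimes\phi_{r2b2}$. *)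

(* Defs.v *)
From HB Require Import structures.
From mathcomp Require Import all_boot all_order all_algebra.
From mathcomp Require Import complex mxtens.
From mathcomp Require Import boolp classical_sets reals.
Set Implicit Arguments. Unset Strict Implicit. Unset Printing Implicit Defensive.
Import Order.TTheory GRing.Theory Num.Theory.
Local Open Scope ring_scope.
Local Open Scope complex_scope.

Section QDefs.
Variable R : realType.
Local Notation C := R[i].

Definition adjmx {m n} (A : 'M[C]_(m, n)) : 'M[C]_(n, m) := map_mx Num.conj A^T.

Definition psd {n} (A : 'M[C]_n) : Prop :=
  adjmx A = A /\ forall v : 'cV[C]_n, 0 <= (adjmx v *m A *m v) 0 0.

Definition is_state {n} (rho : 'M[C]_n) : Prop := psd rho /\ \tr rho = 1.

Definition blockmx {k d} (X : 'M[C]_(k * d)) (i1 j1 : 'I_k) : 'M[C]_d :=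
  \matrix_(i2, j2) X (mxtens_index (i1, i2)) (mxtens_index (j1, j2)).

Definition id_tens {k d} (N : 'M[C]_d -> 'M[C]_d) (X : 'M[C]_(k * d))
  : 'M[C]_(k * d) :=
  \sum_(i1 < k) \sum_(j1 < k) (delta_mx i1 j1 *t N (blockmx X i1 j1)).

Definition is_channel {d} (N : 'M[C]_d -> 'M[C]_d) : Prop :=
  [/\ (forall (a : C) (X Y : 'M[C]_d), N (a *: X + Y) = a *: N X + N Y),
      (forall (k : nat) (X : 'M[C]_(k * d)), psd X -> psd (id_tens N X)) &
      (forall X : 'M[C]_d, \tr (N X) = \tr X)].

Definition chan_tens {d1 d2} (N1 : 'M[C]_d1 -> 'M[C]_d1)
  (N2 : 'M[C]_d2 -> 'M[C]_d2) (X : 'M[C]_(d1 * d2)) : 'M[C]_(d1 * d2) :=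
  \sum_(i1 < d1) \sum_(j1 < d1) \sum_(i2 < d2) \sum_(j2 < d2)
     (X (mxtens_index (i1, i2)) (mxtens_index (j1, j2)) *:
        (N1 (delta_mx i1 j1) *t N2 (delta_mx i2 j2))).

Definition max_ent (d : nat) : 'cV[C]_(d * d) :=
  ((Num.sqrt (d%:R : R))^-1)%:C *:
    \col_k (if (mxtens_unindex k).1 == (mxtens_unindex k).2 :> nat
            then 1 else 0).

Definition ent_fid {d} (N : 'M[C]_d -> 'M[C]_d) (rho : 'M[C]_(d * d)) : C :=
  (adjmx (max_ent d) *m id_tens N rho *m max_ent d) 0 0.

(* O_s(N) = max { <phi|(id (x) N)(rho)|phi> : rho state, Tr rho^2 <= s } ;
   the max is attained (compact feasible set), so it equals the sup. *)
Definition Opt {d} (s : R) (N : 'M[C]_d -> 'M[C]_d) : R :=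
  sup [set x : R | exists rho : 'M[C]_(d * d),
         [/\ is_state rho, \tr (rho *m rho) <= s%:C & x%:C = ent_fid N rho]].

End QDefs.

(* Main.v *)
Require Import Defs.
From HB Require Import structures.
From mathcomp Require Import all_boot all_order all_algebra.
From mathcomp Require Import complex mxtens spectral sesquilinear.
From mathcomp Require Import boolp classical_sets reals.
Set Implicit Arguments. Unset Strict Implicit. Unset Printing Implicit Defensive.
Import Order.TTheory GRing.Theory Num.Theory.
Local Open Scope ring_scope.
Local Open Scope complex_scope.

Section Aux.
Variable R : realType.
Local Notation C := R[i].

Lemma sum_tens (V : nmodType) m n (F : 'I_(m * n) -> V) :
  \sum_k F k = \sum_i \sum_j F (mxtens_index (i, j)).
Proof.
rewrite (reindex (@mxtens_index m n)) /=; last first.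
  by exists (@mxtens_unindex m n) => k _; rewrite ?mxtens_indexK ?mxtens_unindexK.
by rewrite pair_bigA /=; apply: eq_bigr => -[i j].
Qed.

Lemma id_tensE d k (N : 'M[C]_d -> 'M[C]_d) (X : 'M[C]_(k * d)) i a j b :
  id_tens N X (mxtens_index (i, a)) (mxtens_index (j, b)) = N (blockmx X i j) a b.
Proof.
rewrite /id_tens summxE (bigD1 i) //= [X in _ + X]big1 => [|i1 ne]; last first.
  rewrite summxE big1 // => j1 _; rewrite tensmxE mxE.
  by rewrite eq_sym (negbTE ne) /= mul0r.
rewrite addr0 summxE (bigD1 j) //= [X in _ + X]big1 => [|j1 ne]; last first.
  by rewrite tensmxE mxE eqxx eq_sym (negbTE ne) /= mul0r.
by rewrite addr0 tensmxE mxE !eqxx mul1r.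
Qed.

Lemma adjmxE m n (A : 'M[C]_(m, n)) i j : adjmx A i j = Num.conj (A j i).
Proof. by rewrite /adjmx !mxE. Qed.

Lemma conj_realC (x : R) : Num.conj (x%:C) = x%:C.
Proof. exact: conjc_real. Qed.

Lemma conjM (x y : C) : Num.conj (x * y) = Num.conj x * Num.conj y.
Proof. exact: rmorphM. Qed.

Lemma sum_collapse (V : nmodType) n (i : 'I_n) (F : 'I_n -> V) :
  \sum_j (if i == j then F j else 0) = F i.
Proof.
rewrite (bigD1 i) //= eqxx big1 ?addr0 // => j ne.
by rewrite eq_sym (negbTE ne).
Qed.

Lemma sum_delta_r (V : comPzRingType) n (i : 'I_n) (F : 'I_n -> V) :
  \sum_j F j * (if i == j then 1 else 0) = F i.
Proof.
rewrite (bigD1 i) //= eqxx mulr1 big1 ?addr0 // => j ne.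
by rewrite eq_sym (negbTE ne) mulr0.
Qed.

Lemma sum_delta_l (V : comPzRingType) n (i : 'I_n) (F : 'I_n -> V) :
  \sum_j (if i == j then 1 else 0) * F j = F i.
Proof.
rewrite (bigD1 i) //= eqxx mul1r big1 ?addr0 // => j ne.
by rewrite eq_sym (negbTE ne) mul0r.
Qed.

Lemma ent_fidE d (N : 'M[C]_d -> 'M[C]_d) (rho : 'M[C]_(d * d)) : (0 < d)%N ->
  ent_fid N rho = (d%:R)^-1 * \sum_i \sum_j N (blockmx rho i j) i j.
Proof.
move=> d0.
set c := ((Num.sqrt (d%:R : R))^-1)%:C.
have vE k : max_ent R d k 0 = c * (if (mxtens_unindex k).1 == (mxtens_unindex k).2 :> nat then 1 else 0).
  by rewrite /max_ent !mxE.
have cc : c * c = (d%:R)^-1.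
  rewrite /c -rmorphM /= -invfM -expr2 sqr_sqrtr ?ler0n //.
  by rewrite rmorphV ?unitfE ?pnatr_eq0 -?lt0n //= rmorph_nat.
pose e (k : 'I_(d * d)) : C := if (mxtens_unindex k).1 == (mxtens_unindex k).2 :> nat then 1 else 0.
have eE i j : e (mxtens_index (i, j)) = if i == j then 1 else 0.
  by rewrite /e mxtens_indexK.
have ce k : Num.conj (e k) = e k.
  by rewrite /e; case: ifP; rewrite ?rmorph1 ?rmorph0.
have cr : Num.conj c = c by rewrite /c conj_realC.
rewrite /ent_fid mxE.
under eq_bigr do rewrite mxE.
under eq_bigr do under eq_bigr do rewrite adjmxE !vE -/(e _) conjM cr ce.
under eq_bigr => i _ do (under eq_bigr => j _ do rewrite -mulrA; rewrite -big_distrr /= vE -/(e _) mulrACA).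
rewrite -big_distrr /= cc; congr (_ * _).
rewrite sum_tens.
match goal with |- _ = ?r => set T := r end.
under eq_bigr => q1 _ do under eq_bigr => q2 _ do rewrite eE.
under eq_bigr => q1 _ do rewrite sum_delta_r sum_tens.
under eq_bigr => q1 _ do under eq_bigr => p1 _ do under eq_bigr => p2 _ do rewrite eE.
under eq_bigr => q1 _ do under eq_bigr => p1 _ do rewrite sum_delta_l id_tensE.
by rewrite exchange_big /T.
Qed.

Definition linC d (N : 'M[C]_d -> 'M[C]_d) :=
  forall (a : C) (X Y : 'M[C]_d), N (a *: X + Y) = a *: N X + N Y.

Lemma N_expand d (N : 'M[C]_d -> 'M[C]_d) (X : 'M[C]_d) i j : linC N ->
  N X i j = \sum_a \sum_b X a b * N (delta_mx a b) i j.
Proof.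
move=> hN.
have N0 : N 0 = 0.
  have := hN 1 0 0; rewrite scaler0 addr0 scale1r.
  by move/(congr1 (fun z => z - N 0)); rewrite subrr addrK.
have ND X1 Y1 : N (X1 + Y1) = N X1 + N Y1 by have := hN 1 X1 Y1; rewrite !scale1r.
have NZ a X1 : N (a *: X1) = a *: N X1 by have := hN a X1 0; rewrite !addr0 N0 addr0.
rewrite {1}(matrix_sum_delta X).
rewrite (big_morph N ND N0) summxE; apply: eq_bigr => a _.
rewrite (big_morph N ND N0) summxE; apply: eq_bigr => b _.
by rewrite NZ mxE.
Qed.

Lemma chan_tensE d1 d2 (N1 : 'M[C]_d1 -> 'M[C]_d1) (N2 : 'M[C]_d2 -> 'M[C]_d2) X i1 i2 j1 j2 :
  chan_tens N1 N2 X (mxtens_index (i1, i2)) (mxtens_index (j1, j2)) =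
  \sum_a1 \sum_b1 \sum_a2 \sum_b2
     X (mxtens_index (a1, a2)) (mxtens_index (b1, b2)) *
     (N1 (delta_mx a1 b1) i1 j1 * N2 (delta_mx a2 b2) i2 j2).
Proof.
rewrite /chan_tens summxE; apply: eq_bigr => a1 _.
rewrite summxE; apply: eq_bigr => b1 _.
rewrite summxE; apply: eq_bigr => a2 _.
rewrite summxE; apply: eq_bigr => b2 _.
by rewrite mxE tensmxE.
Qed.


Definition reix n n' (f : 'I_n -> 'I_n') (A : 'M[C]_n') : 'M[C]_n :=
  \matrix_(p, q) A (f p) (f q).

Lemma reixM n n' (f : 'I_n -> 'I_n') A B : bijective f ->
  reix f (A *m B) = reix f A *m reix f B.
Proof.
move=> fb; apply/matrixP => p q; rewrite !mxE (reindex f) /=; last exact: onW_bij.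
by apply: eq_bigr => k _; rewrite !mxE.
Qed.

Lemma reix_tr n n' (f : 'I_n -> 'I_n') A : bijective f -> \tr (reix f A) = \tr A.
Proof.
move=> fb; rewrite /mxtrace [RHS](reindex f) /=; last exact: onW_bij.
by apply: eq_bigr => k _; rewrite !mxE.
Qed.

Lemma reix_adj n n' (f : 'I_n -> 'I_n') A : adjmx (reix f A) = reix f (adjmx A).
Proof. by apply/matrixP => p q; rewrite !(adjmxE, mxE). Qed.

Lemma qformE n (A : 'M[C]_n) (v : 'cV[C]_n) :
  (adjmx v *m A *m v) 0 0 = \sum_q \sum_p Num.conj (v p 0) * A p q * v q 0.
Proof.
rewrite mxE; apply: eq_bigr => q _; rewrite mxE big_distrl /=.
by apply: eq_bigr => p _; rewrite adjmxE.
Qed.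

Lemma reix_psd n n' (f : 'I_n -> 'I_n') A : bijective f -> psd A -> psd (reix f A).
Proof.
move=> fb [hA qA]; split; first by rewrite reix_adj hA.
move=> v; case: fb => g fg gf.
pose w : 'cV[C]_n' := \col_u v (g u) 0.
have fb : {on [pred i | true], bijective f} by exists g => x _.
have := qA w; rewrite !qformE (reindex f) //=.
congr (_ <= _); apply: eq_bigr => q _; rewrite (reindex f) //=.
by apply: eq_bigr => p _; rewrite !mxE !fg.
Qed.


Lemma adjmxM m n p (A : 'M[C]_(m, n)) (B : 'M[C]_(n, p)) :
  adjmx (A *m B) = adjmx B *m adjmx A.
Proof. by rewrite /adjmx trmx_mul map_mxM. Qed.

Lemma adjmxK m n (A : 'M[C]_(m, n)) : adjmx (adjmx A) = A.
Proof. by apply/matrixP => i j; rewrite !adjmxE conjCK. Qed.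

Lemma psd_XX n m (X : 'M[C]_(n, m)) : psd (X *m adjmx X).
Proof.
split; first by rewrite adjmxM adjmxK.
move=> v; rewrite mulmxA -mulmxA -[adjmx v *m X]adjmxK adjmxM adjmxK mxE.
by apply: sumr_ge0 => k _; rewrite adjmxE mulrC mul_conjC_ge0.
Qed.

Lemma psd_gram n (A : 'M[C]_n) : psd A -> exists X : 'M[C]_n, A = X *m adjmx X.
Proof.
move=> [hA qA].
have nA : A \is normalmx by apply/normalmxP; rewrite -/(adjmx A) hA.
have /orthomx_spectralP Ae := nA.
set P := spectralmx A in Ae; set sp := spectral_diag A in Ae.
have Pu : P \is unitarymx by apply: spectral_unitarymx.
rewrite invmx_unitary // in Ae.
have PP : P *m adjmx P = 1%:M by apply/unitarymxP.
have spE : P *m A *m adjmx P = diag_mx sp.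
  by rewrite Ae !mulmxA PP mul1mx -mulmxA PP mulmx1.
have sp0 k : 0 <= sp 0 k.
  have := qA (col k (adjmx P)).
  have -> : adjmx (col k (adjmx P)) = row k P.
    by apply/matrixP => i j; rewrite !(adjmxE, mxE) conjCK.
  suff -> : (row k P *m A *m col k (adjmx P)) 0 0 = sp 0 k by [].
  have := congr1 (fun M : 'M[C]_n => M k k) spE; rewrite [diag_mx _ _ _]mxE eqxx mulr1n => <-.
  rewrite [LHS]mxE [RHS]mxE; apply: eq_bigr => j _.
  by rewrite -row_mul [col _ _ _ _]mxE [row _ _ _ _]mxE.
pose X := adjmx P *m diag_mx (\row_k sqrtC (sp 0 k)).
exists X; rewrite /X adjmxM adjmxK !mulmxA Ae; congr (_ *m _).
rewrite -mulmxA; congr (_ *m _).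
apply/matrixP => i j; rewrite mul_diag_mx !mxE.
case: (eqVneq i j) => [<-|ne]; last first.
  by rewrite !mulr0n rmorph0 mulr0.
rewrite !mulr1n.
have r : sqrtC (sp 0 i) \is Num.real by apply: ger0_real; rewrite sqrtC_ge0.
by rewrite (conj_Creal r) -expr2 sqrtCK.
Qed.




Lemma adjmx_tens m n p q (A : 'M[C]_(m, n)) (B : 'M[C]_(p, q)) :
  adjmx (A *t B) = adjmx A *t adjmx B.
Proof.
apply/matrixP => i j; rewrite -(mxtens_unindexK i) -(mxtens_unindexK j).
by case: (mxtens_unindex i) => i1 i2; case: (mxtens_unindex j) => j1 j2; rewrite adjmxE !tensmxE !adjmxE conjM.
Qed.

Lemma psd_tens m n (A : 'M[C]_m) (B : 'M[C]_n) : psd A -> psd B -> psd (A *t B).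
Proof.
move=> /psd_gram [X ->] /psd_gram [Y ->].
by rewrite -(tensmx_mul X Y (adjmx X) (adjmx Y)) -adjmx_tens; apply: psd_XX.
Qed.

Lemma tr_tens m n (A : 'M[C]_m) (B : 'M[C]_n) : \tr (A *t B) = \tr A * \tr B.
Proof.
rewrite /mxtrace sum_tens big_distrl /=; apply: eq_bigr => i _.
by rewrite big_distrr; apply: eq_bigr => j _; rewrite tensmxE.
Qed.

Definition sig d1 d2 (p : 'I_((d1 * d2) * (d1 * d2))) : 'I_((d1 * d1) * (d2 * d2)) :=
  let ra := mxtens_unindex p in
  let r := mxtens_unindex ra.1 in let a := mxtens_unindex ra.2 in
  mxtens_index (mxtens_index (r.1, a.1), mxtens_index (r.2, a.2)).

Definition sigV d1 d2 (u : 'I_((d1 * d1) * (d2 * d2))) : 'I_((d1 * d2) * (d1 * d2)) :=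
  let ra := mxtens_unindex u in
  let r := mxtens_unindex ra.1 in let a := mxtens_unindex ra.2 in
  mxtens_index (mxtens_index (r.1, a.1), mxtens_index (r.2, a.2)).

Lemma sigE d1 d2 (i1 a1 : 'I_d1) (i2 a2 : 'I_d2) :
  sig (mxtens_index (mxtens_index (i1, i2), mxtens_index (a1, a2))) =
  mxtens_index (mxtens_index (i1, a1), mxtens_index (i2, a2)).
Proof. by rewrite /sig !mxtens_indexK. Qed.

Lemma sig_bij d1 d2 : bijective (@sig d1 d2).
Proof.
exists (@sigV d1 d2).
  move=> p; rewrite -(mxtens_unindexK p); case: (mxtens_unindex p) => r a.
  rewrite -(mxtens_unindexK r) -(mxtens_unindexK a).
  case: (mxtens_unindex r) => r1 r2; case: (mxtens_unindex a) => a1 a2.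
  by rewrite sigE /sigV !mxtens_indexK.
move=> u; rewrite -(mxtens_unindexK u); case: (mxtens_unindex u) => r a.
rewrite -(mxtens_unindexK r) -(mxtens_unindexK a).
case: (mxtens_unindex r) => r1 r2; case: (mxtens_unindex a) => a1 a2.
by rewrite /sigV !mxtens_indexK sigE.
Qed.

Definition Qst d1 d2 (r1 : 'M[C]_(d1 * d1)) (r2 : 'M[C]_(d2 * d2)) :=
  reix (@sig d1 d2) (r1 *t r2).

Lemma QstE d1 d2 (r1 : 'M[C]_(d1 * d1)) (r2 : 'M[C]_(d2 * d2)) i1 i2 a1 a2 j1 j2 b1 b2 :
  Qst r1 r2 (mxtens_index (mxtens_index (i1, i2), mxtens_index (a1, a2)))
            (mxtens_index (mxtens_index (j1, j2), mxtens_index (b1, b2))) =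
  r1 (mxtens_index (i1, a1)) (mxtens_index (j1, b1)) *
  r2 (mxtens_index (i2, a2)) (mxtens_index (j2, b2)).
Proof. by rewrite /Qst /reix mxE !sigE tensmxE. Qed.

Lemma Qst_psd d1 d2 (r1 : 'M[C]_(d1 * d1)) (r2 : 'M[C]_(d2 * d2)) :
  psd r1 -> psd r2 -> psd (Qst r1 r2).
Proof. by move=> p1 p2; apply: reix_psd; [apply: sig_bij | apply: psd_tens]. Qed.

Lemma Qst_tr d1 d2 (r1 : 'M[C]_(d1 * d1)) (r2 : 'M[C]_(d2 * d2)) :
  \tr (Qst r1 r2) = \tr r1 * \tr r2.
Proof. by rewrite reix_tr ?tr_tens //; apply: sig_bij. Qed.

Lemma Qst_pur d1 d2 (r1 : 'M[C]_(d1 * d1)) (r2 : 'M[C]_(d2 * d2)) :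
  \tr (Qst r1 r2 *m Qst r1 r2) = \tr (r1 *m r1) * \tr (r2 *m r2).
Proof.
by rewrite /Qst -reixM ?reix_tr ?tensmx_mul ?tr_tens //; apply: sig_bij.
Qed.



Lemma fid_prod d1 d2 (N1 : 'M[C]_d1 -> 'M[C]_d1) (N2 : 'M[C]_d2 -> 'M[C]_d2)
  (r1 : 'M[C]_(d1 * d1)) (r2 : 'M[C]_(d2 * d2)) :
  (0 < d1)%N -> (0 < d2)%N -> linC N1 -> linC N2 ->
  ent_fid (chan_tens N1 N2) (Qst r1 r2) = ent_fid N1 r1 * ent_fid N2 r2.
Proof.
move=> h1 h2 l1 l2.
rewrite !ent_fidE ?muln_gt0 ?h1 ?h2 // natrM invfM mulrACA; congr (_ * _).
rewrite sum_tens.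
under eq_bigr => i1 _ do under eq_bigr => i2 _ do rewrite sum_tens.
under eq_bigr => i1 _ do under eq_bigr => i2 _ do under eq_bigr => j1 _ do
  under eq_bigr => j2 _ do rewrite chan_tensE.
under eq_bigr => i1 _ do under eq_bigr => i2 _ do under eq_bigr => j1 _ do
  under eq_bigr => j2 _ do under eq_bigr => a1 _ do under eq_bigr => b1 _ do
  under eq_bigr => a2 _ do under eq_bigr => b2 _ do rewrite /blockmx mxE QstE mulrACA.
match goal with |- ?l = _ => set L := l end.
under eq_bigr => i1 _ do under eq_bigr => j1 _ do rewrite (N_expand _ _ _ l1).
under [X in _ * X]eq_bigr => i2 _ do under eq_bigr => j2 _ do rewrite (N_expand _ _ _ l2).
rewrite /L big_distrl; apply: eq_bigr => i1 _.
rewrite big_distrr; apply: eq_bigr => i2 _.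
rewrite big_distrl; apply: eq_bigr => j1 _.
rewrite big_distrr; apply: eq_bigr => j2 _.
rewrite big_distrl; apply: eq_bigr => a1 _.
rewrite big_distrl; apply: eq_bigr => b1 _.
rewrite big_distrr; apply: eq_bigr => a2 _.
rewrite big_distrr; apply: eq_bigr => b2 _.
by rewrite !mxE.
Qed.


Lemma fid_ge0 d (N : 'M[C]_d -> 'M[C]_d) rho :
  is_channel N -> is_state rho -> 0 <= ent_fid N rho.
Proof. by case=> _ cp _ [pr _]; exact: (cp d rho pr).2. Qed.

Lemma ge0_Re (z : C) : 0 <= z -> z = (complex.Re z)%:C.
Proof. by move=> /ger0_Im; case: z => a b /= ->. Qed.

Lemma purE n (rho : 'M[C]_n) : adjmx rho = rho ->
  \tr (rho *m rho) = \sum_p \sum_q `|rho p q| ^+ 2.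
Proof.
move=> h; apply: eq_bigr => p _; rewrite mxE; apply: eq_bigr => q _.
have -> : rho q p = Num.conj (rho p q) by rewrite -{1}h adjmxE.
by rewrite normCK.
Qed.

Lemma pur_ge0 n (rho : 'M[C]_n) : adjmx rho = rho -> 0 <= \tr (rho *m rho).
Proof.
by move=> h; rewrite purE //; apply: sumr_ge0 => p _; apply: sumr_ge0 => q _; apply: exprn_ge0.
Qed.

Lemma entry_le1 n (rho : 'M[C]_n) : adjmx rho = rho -> \tr (rho *m rho) <= 1 ->
  forall p q, `|rho p q| <= 1.
Proof.
move=> h; rewrite purE // => le p q.
rewrite -(expr_le1 (n := 2)) //; apply: le_trans le.
rewrite (bigD1 p) //= (bigD1 q) //= -addrA lerDl.
apply: addr_ge0; first by apply: sumr_ge0 => ? _; apply: exprn_ge0.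
by apply: sumr_ge0 => ? _; apply: sumr_ge0 => ? _; apply: exprn_ge0.
Qed.



Lemma norm_sum_le n (F : 'I_n -> C) G : (forall i, `|F i| <= G i) ->
  `|\sum_i F i| <= \sum_i G i.
Proof. by move=> h; apply: le_trans (ler_norm_sum _ _ _) _; apply: ler_sum. Qed.

Lemma fid_bound d1 d2 (N1 : 'M[C]_d1 -> 'M[C]_d1) (N2 : 'M[C]_d2 -> 'M[C]_d2) :
  (0 < d1)%N -> (0 < d2)%N ->
  exists K : R, forall rho : 'M[C]_((d1 * d2) * (d1 * d2)), (forall p q, `|rho p q| <= 1) ->
    forall x : R, x%:C = ent_fid (chan_tens N1 N2) rho -> x <= K.
Proof.
move=> h1 h2.
pose M (a1 b1 : 'I_d1) (a2 b2 : 'I_d2) := N1 (delta_mx a1 b1) *t N2 (delta_mx a2 b2).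
pose Kc : C := `|((d1 * d2)%:R : C)^-1| * \sum_i \sum_j \sum_a1 \sum_b1 \sum_a2 \sum_b2 `|M a1 b1 a2 b2 i j|.
exists (complex.Re Kc) => rho hr x hx.
have : x%:C <= Kc.
  have xr : x%:C \is Num.real by apply/complex_realP; exists x.
  apply: le_trans (real_ler_norm xr) _; rewrite hx ent_fidE ?muln_gt0 ?h1 ?h2 //.
  rewrite normrM; apply: ler_wpM2l => //.
  apply: norm_sum_le => i; apply: norm_sum_le => j.
  rewrite /chan_tens summxE; apply: norm_sum_le => a1.
  rewrite summxE; apply: norm_sum_le => b1.
  rewrite summxE; apply: norm_sum_le => a2.
  rewrite summxE; apply: norm_sum_le => b2.
  rewrite mxE normrM -[X in _ <= X]mul1r; apply: ler_wpM2r => //.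
  by rewrite /blockmx mxE.
by rewrite lecE => /andP[_].
Qed.



Lemma mixed_state d : (0 < d)%N -> exists rho : 'M[C]_(d * d),
  is_state rho /\ \tr (rho *m rho) = (((d%:R : R) ^+ 2)^-1)%:C.
Proof.
move=> d0.
set c : R := ((d%:R : R) ^+ 2)^-1.
have c0 : 0 <= c by rewrite /c invr_ge0 exprn_ge0 ?ler0n.
have cd : c * (d * d)%:R = 1 by rewrite natrM -expr2 mulVf // expf_neq0 // pnatr_eq0 -lt0n.
have nC k : (k%:R : C) = (k%:R : R)%:C by rewrite (rmorph_nat (real_complex R)).
exists (c%:C)%:M; split; [split; [split|] |].
- apply/matrixP => i j; rewrite adjmxE !mxE eq_sym.
  by case: (i == j); rewrite ?mulr1n ?mulr0n ?conj_realC ?rmorph0.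
- move=> v; rewrite mul_mx_scalar -scalemxAl mxE.
  apply: mulr_ge0; first by rewrite ler0c.
  rewrite mxE; apply: sumr_ge0 => k _; rewrite adjmxE mulrC; exact: mul_conjC_ge0.
- by rewrite mxtrace_scalar -mulr_natr nC -rmorphM /= cd.
by rewrite -scalar_mxM mxtrace_scalar -mulr_natr nC -!rmorphM /= -mulrA cd mulr1.
Qed.

Section Sup.

Local Open Scope classical_set_scope.

Lemma sup_prod (A B Cs : set R) : (exists a, A a) -> (exists b, B b) ->
  (forall a, A a -> 0 <= a) -> (forall b, B b -> 0 <= b) -> has_ubound Cs ->
  (forall a b, A a -> B b -> Cs (a * b)) -> sup A * sup B <= sup Cs.
Proof.
move=> [a0 Aa0] [b0 Bb0] Ap Bp Cu AB.
have Cs_sup : has_sup Cs by split => //; exists (a0 * b0); exact: AB.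
have Cle c : Cs c -> c <= sup Cs by move=> Cc; exact: sup_upper_bound.
have s0 : 0 <= sup Cs by apply: le_trans (Cle _ (AB _ _ Aa0 Bb0)); apply: mulr_ge0; auto.
have [hA|hA] := pselect (has_sup A); last by rewrite (sup_out hA) mul0r.
have [hB|hB] := pselect (has_sup B); last by rewrite (sup_out hB) mulr0.
have sA0 : 0 <= sup A by apply: le_trans (Ap _ Aa0) _; exact: sup_upper_bound.
have cl1 b : B b -> sup A * b <= sup Cs.
  move=> Bb; have [->|bn] := eqVneq b 0; first by rewrite mulr0.
  have bp : 0 < b by rewrite lt_def bn Bp.
  rewrite -ler_pdivlMr //; apply: ge_sup; first by exists a0.
  by move=> a Aa; rewrite ler_pdivlMr //; exact: Cle (AB _ _ Aa Bb).
have [->|sn] := eqVneq (sup A) 0; first by rewrite mul0r.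
have sp : 0 < sup A by rewrite lt_def sn sA0.
rewrite mulrC -ler_pdivlMr //; apply: ge_sup; first by exists b0.
by move=> b Bb; rewrite ler_pdivlMr // mulrC; exact: cl1.
Qed.

End Sup.
End Aux.

Section Main.
Variable R : realType.
Local Notation C := R[i].

Lemma realCM (a b : R) : (a * b)%:C = a%:C * b%:C :> C.
Proof. exact: rmorphM. Qed.

Lemma opt_prod d1 d2 (N1 : 'M[C]_d1 -> 'M[C]_d1) (N2 : 'M[C]_d2 -> 'M[C]_d2)
  (s1 s2 t : R) : (0 < d1)%N -> (0 < d2)%N -> is_channel N1 -> is_channel N2 ->
  t <= 1 -> s1 * s2 <= t -> (d1%:R ^+ 2)^-1 <= s1 -> (d2%:R ^+ 2)^-1 <= s2 ->
  Opt s1 N1 * Opt s2 N2 <= Opt t (chan_tens N1 N2).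
Proof.
move=> h1 h2 hN1 hN2 t1 st e1 e2.
have hN1' := hN1; have hN2' := hN2.
case: hN1' => l1 _ _; case: hN2' => l2 _ _.
apply: sup_prod.
- have [rho [st0 tr0]] := mixed_state R h1.
  exists (complex.Re (ent_fid N1 rho)), rho; split => //.
    by rewrite tr0 lecR.
  by rewrite -ge0_Re //; apply: fid_ge0.
- have [rho [st0 tr0]] := mixed_state R h2.
  exists (complex.Re (ent_fid N2 rho)), rho; split => //.
    by rewrite tr0 lecR.
  by rewrite -ge0_Re //; apply: fid_ge0.
- by move=> x [rho [st0 _ hx]]; rewrite -ler0c hx; exact: fid_ge0.
- by move=> x [rho [st0 _ hx]]; rewrite -ler0c hx; exact: fid_ge0.
- have [K hK] := fid_bound N1 N2 h1 h2.
  exists K => x [rho [[[hr _] _] pur hx]].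
  apply: (hK rho) hx; apply: entry_le1 => //.
  by apply: le_trans pur _; rewrite -(rmorph1 (real_complex R)) lecR.
- move=> a b [r1 [[p1 tr1] pur1 ha]] [r2 [[p2 tr2] pur2 hb]].
  exists (Qst r1 r2); split.
  + by split; [apply: Qst_psd | rewrite Qst_tr tr1 tr2 mulr1].
  + rewrite Qst_pur; apply: le_trans (_ : s1%:C * s2%:C <= t%:C).
      apply: ler_pM => //; [exact: pur_ge0 p1.1 | exact: pur_ge0 p2.1].
    by rewrite -rmorphM lecR.
  + by rewrite fid_prod // realCM ha hb.
Qed.

End Main.

Unset Implicit Arguments.

Theorem mainTheorem7 (R : realType) (d1 d2 : nat) (hd1 : (0 < d1)%N) (hd2 : (0 < d2)%N)
  (N1 : 'M[R[i]]_d1 -> 'M[R[i]]_d1) (N2 : 'M[R[i]]_d2 -> 'M[R[i]]_d2)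
  (hN1 : is_channel N1) (hN2 : is_channel N2) (t : R) (ht0 : 0 < t) (ht1 : t <= 1) :
  (Num.max (d1%:R ^+ 2)^-1 (d2%:R ^+ 2)^-1 <= t ->
     Opt t (chan_tens N1 N2) >= Opt t N1 * Opt t N2) /\
  (Num.max (d1%:R ^+ 2)^-1 (d2%:R ^+ 2)^-1 <= Num.sqrt t ->
     Opt t (chan_tens N1 N2) >= Opt (Num.sqrt t) N1 * Opt (Num.sqrt t) N2).
Proof.
split.
- rewrite ge_max => /andP[e1 e2]; apply: opt_prod => //.
  by rewrite -[X in _ <= X]mulr1; apply: ler_wpM2l => //; exact: ltW.
- rewrite ge_max => /andP[e1 e2]; apply: opt_prod => //.
  by rewrite -expr2 sqr_sqrtr // ltW.
Qed.
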